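(* In every orthomodular lattice, for all elements $a,b,c,d$ the following hold: (1) $(a\to_1 b)\cap(b\to_2 c)\cap(c\to_1 d)\cap(d\to_2 a) = (a\equiv b)\cap(b\equiv c)\cap(c\equiv d)$; (2) $(a\to_5 b)\cap(b\to_5 c)\cap(c\to_5 d)\cap(d\to_5 a) = (a\equiv b)\cap(b\equiv c)\cap(c\equiv d)$; (3) $(a\to_1 b)\cap(b\to_2 c)\cap(c\to_1 a)\le a\equiv c$; (4) $(a\equiv b)\cap((b\equiv c)\cup(a\equiv c)) = ((a\equiv b)\cap(b\equiv c))\cup((a\equiv b)\cap(a\equiv c))$; (5) $(a\equiv b)\cap((b\equiv c)\cup(a\equiv c))\le a\equiv c$; (6) $(a\equiv b)\to_0((a\equiv c)\equiv(b\equiv c)) = 1$.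
   Context: An orthomodular lattice is an ortholattice $(L,\cap,\cup,{}',0,1)$ satisfying $a\le b\Rightarrow b=a\cup(a'\cap b)$. Notation: $a\equiv b=(a\cap b)\cup(a'\cap b')$; $a\to_0 b=a'\cup b$; $a\to_1 b=a'\cup(a\cap b)$; $a\to_2 b=b\cup(a'\cap b')$; $a\to_5 b=(a\cap b)\cup(a'\cap b)\cup(a'\cap b')$. *)

(* Defs.v *)
Set Implicit Arguments.

Record OML := {
  car :> Type;
  meet : car -> car -> car;
  join : car -> car -> car;
  oc : car -> car;
  zero : car;
  one : car;
  join_comm : forall a b, join a b = join b a;
  meet_comm : forall a b, meet a b = meet b a;
  join_assoc : forall a b c, join a (join b c) = join (join a b) c;
  meet_assoc : forall a b c, meet a (meet b c) = meet (meet a b) c;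
  join_absorb : forall a b, join a (meet a b) = a;
  meet_absorb : forall a b, meet a (join a b) = a;
  join_zero : forall a, join a zero = a;
  meet_one : forall a, meet a one = a;
  oc_invol : forall a, oc (oc a) = a;
  oc_antitone : forall a b, join a b = b -> join (oc b) (oc a) = oc a;
  oc_join : forall a, join a (oc a) = one;
  oc_meet : forall a, meet a (oc a) = zero;
  orthomodular : forall a b, join a b = b -> b = join a (meet (oc a) b)
}.

Section Ops.
Variable L : OML.
Definition le (a b : L) : Prop := join L a b = b.
Definition biimp (a b : L) : L := join L (meet L a b) (meet L (oc L a) (oc L b)).
Definition imp0 (a b : L) : L := join L (oc L a) b.
Definition imp1 (a b : L) : L := join L (oc L a) (meet L a b).
Definition imp2 (a b : L) : L := join L b (meet L (oc L a) (oc L b)).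
Definition imp5 (a b : L) : L :=
  join L (join L (meet L a b) (meet L (oc L a) b)) (meet L (oc L a) (oc L b)).
End Ops.
Arguments le {L}.
Arguments biimp {L}.
Arguments imp0 {L}.
Arguments imp1 {L}.
Arguments imp2 {L}.
Arguments imp5 {L}.

(* Main.v *)
Require Import Defs.
From Stdlib Require Import Setoid.

Section OMLTheory.
Variable L : OML.
Local Notation "x ⊓ y" := (meet L x y) (at level 40, left associativity).
Local Notation "x ⊔ y" := (join L x y) (at level 50, left associativity).
Local Notation "x ^c" := (oc L x) (at level 30).

Lemma join_idem (x : L) : x ⊔ x = x.
Proof. rewrite <- (meet_absorb L x x) at 2. apply join_absorb. Qed.
Lemma meet_idem (x : L) : x ⊓ x = x.
Proof. rewrite <- (join_absorb L x x) at 2. apply meet_absorb. Qed.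

Lemma le_refl (x : L) : le x x.
Proof. apply join_idem. Qed.
Lemma le_trans (x y z : L) : le x y -> le y z -> le x z.
Proof. unfold le; intros H1 H2. rewrite <- H2, join_assoc, H1. reflexivity. Qed.
Lemma le_antisym (x y : L) : le x y -> le y x -> x = y.
Proof. unfold le; intros H1 H2. rewrite <- H1, join_comm. symmetry. exact H2. Qed.
Lemma le_meet_iff (x y : L) : le x y <-> x ⊓ y = x.
Proof. unfold le; split; intro H.
- rewrite <- H. apply meet_absorb.
- rewrite <- H, join_comm, meet_comm. apply join_absorb. Qed.
Lemma join_lub (x y z : L) : le x z -> le y z -> le (x ⊔ y) z.
Proof. unfold le; intros H1 H2. rewrite <- join_assoc, H2, H1. reflexivity. Qed.
Lemma meet_glb (x y z : L) : le z x -> le z y -> le z (x ⊓ y).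
Proof. rewrite !le_meet_iff; intros H1 H2. rewrite meet_assoc, H1, H2. reflexivity. Qed.
Lemma le_jl (x y z : L) : le x y -> le x (y ⊔ z).
Proof. intro H. apply le_trans with y; auto. unfold le. rewrite join_assoc, join_idem. reflexivity. Qed.
Lemma le_jr (x y z : L) : le x z -> le x (y ⊔ z).
Proof. intro H. rewrite join_comm. apply le_jl; auto. Qed.
Lemma le_ml (x y z : L) : le x z -> le (x ⊓ y) z.
Proof. intro H. apply le_trans with x; auto. unfold le. rewrite join_comm, join_absorb. reflexivity. Qed.
Lemma le_mr (x y z : L) : le y z -> le (x ⊓ y) z.
Proof. intro H. rewrite meet_comm. apply le_ml; auto. Qed.
Lemma le_one (x : L) : le x (one L).
Proof. apply le_meet_iff, meet_one. Qed.
Lemma le_zero (x : L) : le (zero L) x.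
Proof. unfold le. rewrite join_comm. apply join_zero. Qed.

Ltac lat := first
 [ apply le_refl
 | assumption
 | apply le_zero | apply le_one
 | apply join_lub; lat
 | apply meet_glb; lat
 | apply le_jl; lat
 | apply le_jr; lat
 | apply le_ml; lat
 | apply le_mr; lat ].

Lemma oc_anti (x y : L) : le x y -> le (y ^c) (x ^c).
Proof. apply oc_antitone. Qed.
Lemma orth_sym (x y : L) : le x (y^c) -> le y (x^c).
Proof. intro H. apply oc_anti in H. rewrite oc_invol in H. exact H. Qed.
Lemma deM_join (x y : L) : (x ⊔ y)^c = x^c ⊓ y^c.
Proof. apply le_antisym.
- apply meet_glb; apply oc_anti; lat.
- apply orth_sym. apply join_lub.
  + apply orth_sym. rewrite ?oc_invol. lat.
  + apply orth_sym. rewrite ?oc_invol. lat.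
Qed.
Lemma deM_meet (x y : L) : (x ⊓ y)^c = x^c ⊔ y^c.
Proof. rewrite <- (oc_invol L (x^c ⊔ y^c)), deM_join, !oc_invol. reflexivity. Qed.

Ltac norm := rewrite ?deM_join, ?deM_meet, ?oc_invol.
Ltac olat := norm; lat.

Lemma le_contra (z y : L) : le z y -> le z (y^c) -> z = zero L.
Proof. intros H1 H2. apply le_antisym; [|apply le_zero].
  rewrite <- (oc_meet L y). lat. Qed.
Lemma join_zero_l (x : L) : zero L ⊔ x = x.
Proof. rewrite join_comm. apply join_zero. Qed.

Lemma OM (x y : L) : le x y -> y = x ⊔ (x^c ⊓ y).
Proof. apply orthomodular. Qed.
Lemma OM2 (z w : L) : le z w -> le (w ⊓ z^c) (zero L) -> z = w.
Proof. intros H1 H2. rewrite (OM _ _ H1). rewrite meet_comm.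
  rewrite (le_antisym _ _ H2 (le_zero _)). rewrite join_zero. reflexivity. Qed.

Definition C (x y : L) := x = (x ⊓ y) ⊔ (x ⊓ y^c).

Lemma C_le (x y : L) : le x y -> C x y.
Proof. intro H. unfold C. assert (E : x ⊓ y^c = zero L).
  { apply le_contra with y; lat. }
  rewrite E, join_zero. symmetry. apply le_meet_iff. exact H. Qed.
Lemma C_compl (x y : L) : C x y -> C x (y^c).
Proof. unfold C. rewrite oc_invol, (join_comm L (x ⊓ y^c)). auto. Qed.
Lemma C_sym (x y : L) : C x y -> C y x.
Proof. unfold C. intro H. apply le_antisym; [| lat].
  assert (Hp : le (x ⊓ y) y) by lat.
  apply le_trans with ((x ⊓ y) ⊔ ((x ⊓ y)^c ⊓ y)).
  { rewrite <- (OM _ _ Hp). apply le_refl. }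
  apply join_lub; [lat|].
  assert (Hx : x^c = ((x ⊓ y) ⊔ (x ⊓ y^c))^c) by (f_equal; exact H).
  apply le_jr. apply meet_glb; [lat|]. rewrite Hx. rewrite deM_join.
  apply meet_glb; [lat|]. apply le_mr. olat.
Qed.
Lemma C_le_oc (v A : L) : le v (A^c) -> C v A.
Proof. intro H. apply C_le, C_compl in H. rewrite oc_invol in H. exact H. Qed.
Lemma Ccompl_l (y x : L) : C y x -> C (y^c) x.
Proof. intro H. apply C_sym, C_compl, C_sym. exact H. Qed.

Lemma K (x y : L) : C x y -> x ⊓ (x^c ⊔ y) = x ⊓ y.
Proof. intro H. symmetry. apply OM2; [lat|].
  assert (Hx : x^c = ((x ⊓ y) ⊔ (x ⊓ y^c))^c) by (f_equal; exact H).
  rewrite ?deM_join, ?deM_meet, ?oc_invol in Hx.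
  apply le_trans with (x ⊓ x^c); [| rewrite oc_meet; apply le_refl].
  apply meet_glb; [lat|]. rewrite Hx. norm. lat.
Qed.

Arguments C_compl {x y}. Arguments K {x y}. Arguments C_sym {x y}. Arguments Ccompl_l {y x}. Arguments C_le_oc {v A}. Arguments C_le {x y}.

Lemma FH (x y z : L) : C x y -> C x z -> x ⊓ (y ⊔ z) = (x ⊓ y) ⊔ (x ⊓ z).
Proof. intros Hy Hz. symmetry. apply OM2; [lat|].
  pose proof (K (C_compl Hy)) as Ky. pose proof (K (C_compl Hz)) as Kz.
  rewrite ?oc_invol in Ky, Kz.
  apply le_trans with ((y ⊔ z) ⊓ (y ⊔ z)^c); [| rewrite oc_meet; apply le_refl].
  norm. apply meet_glb; [lat|].
  apply le_trans with ((x ⊓ (x^c ⊔ y^c)) ⊓ (x ⊓ (x^c ⊔ z^c))); [lat|].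
  rewrite Ky, Kz. lat.
Qed.

Lemma C_join (y z x : L) : C y x -> C z x -> C (y ⊔ z) x.
Proof. intros Hy Hz. unfold C. apply le_antisym; [|lat].
  apply join_lub.
  - apply le_trans with ((y ⊓ x) ⊔ (y ⊓ x^c)); [rewrite <- Hy; apply le_refl| lat].
  - apply le_trans with ((z ⊓ x) ⊔ (z ⊓ x^c)); [rewrite <- Hz; apply le_refl| lat].
Qed.

Arguments C_join {y z x}.

Lemma C_meet (y z x : L) : C y x -> C z x -> C (y ⊓ z) x.
Proof. intros Hy Hz. pose proof (Ccompl_l (C_join (Ccompl_l Hy) (Ccompl_l Hz))) as H.
  rewrite deM_join, !oc_invol in H. exact H. Qed.

Lemma split (u v A : L) : le u A -> le v (A^c) -> (u ⊔ v) ⊓ A = u.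
Proof. intros Hu Hv. rewrite meet_comm, FH.
  - rewrite (le_contra (A ⊓ v) A); [| lat | lat].
    rewrite join_zero, meet_comm. apply le_meet_iff. exact Hu.
  - apply C_sym, C_le, Hu.
  - apply C_sym, C_le_oc, Hv.
Qed.

Lemma L4le (u v P Q : L) : le u (v^c) -> le v (P^c) -> le P (Q^c) -> le Q (u^c) ->
  le ((u ⊔ v) ⊓ (P ⊔ Q)) ((u ⊓ P) ⊔ (v ⊓ Q)).
Proof. intros H1 H2 H3 H4.
  assert (hvA : le v ((u ⊔ P)^c)) by (norm; apply meet_glb; [apply orth_sym; exact H1| exact H2]).
  assert (hQA : le Q ((u ⊔ P)^c)) by (norm; apply meet_glb; [exact H4| apply orth_sym; exact H3]).
  assert (E1 : (u ⊔ v) ⊓ (u ⊔ P) = u) by (apply split; [lat| exact hvA]).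
  assert (E2 : (u ⊔ v) ⊓ (u ⊔ P)^c = v)
    by (rewrite join_comm; apply split; [exact hvA| rewrite oc_invol; lat]).
  assert (E3 : (P ⊔ Q) ⊓ (u ⊔ P) = P) by (apply split; [lat| exact hQA]).
  assert (E4 : (P ⊔ Q) ⊓ (u ⊔ P)^c = Q)
    by (rewrite join_comm; apply split; [exact hQA| rewrite oc_invol; lat]).
  assert (CA : C ((u ⊔ v) ⊓ (P ⊔ Q)) (u ⊔ P)).
  { apply C_meet; apply C_join.
    - apply C_le; lat.
    - apply C_le_oc; exact hvA.
    - apply C_le; lat.
    - apply C_le_oc; exact hQA. }
  unfold C in CA. rewrite CA. apply join_lub.
  - apply le_trans with (((u ⊔ v) ⊓ (u ⊔ P)) ⊓ ((P ⊔ Q) ⊓ (u ⊔ P))); [lat|].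
    rewrite E1, E3. lat.
  - apply le_trans with (((u ⊔ v) ⊓ (u ⊔ P)^c) ⊓ ((P ⊔ Q) ⊓ (u ⊔ P)^c)); [lat|].
    rewrite E2, E4. lat.
Qed.

Lemma sas2 (x p q : L) : le p x -> le q (x^c) -> le ((x ⊔ q) ⊓ (x^c ⊔ p)) (p ⊔ q).
Proof. intros Hp Hq.
  apply le_trans with ((x^c ⊔ p) ⊓ (q ⊔ x)); [lat|].
  apply le_trans with ((x^c ⊓ q) ⊔ (p ⊓ x)).
  - apply L4le.
    + apply oc_anti, Hp.
    + apply le_trans with x; [exact Hp|]. apply orth_sym, Hq.
    + exact Hq.
    + rewrite oc_invol. apply le_refl.
  - lat.
Qed.

Lemma main (a b c d : L) :
  meet L (meet L (meet L (imp1 a b) (imp2 b c)) (imp1 c d)) (imp2 d a)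
    = meet L (meet L (biimp a b) (biimp b c)) (biimp c d) /\
  meet L (meet L (meet L (imp5 a b) (imp5 b c)) (imp5 c d)) (imp5 d a)
    = meet L (meet L (biimp a b) (biimp b c)) (biimp c d) /\
  le (meet L (meet L (imp1 a b) (imp2 b c)) (imp1 c a)) (biimp a c) /\
  meet L (biimp a b) (join L (biimp b c) (biimp a c))
    = join L (meet L (biimp a b) (biimp b c)) (meet L (biimp a b) (biimp a c)) /\
  le (meet L (biimp a b) (join L (biimp b c) (biimp a c))) (biimp a c) /\
  imp0 (biimp a b) (biimp (biimp a c) (biimp b c)) = one L.
Proof.
  assert (X5 : forall a b c : L,
     le (biimp a b ⊓ (biimp b c ⊔ biimp a c)) (biimp a c ⊓ biimp b c)).
  { clear. intros a b c. unfold biimp.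
    apply le_trans with (((a ⊓ b) ⊔ (a^c ⊓ b^c)) ⊓
       (((a ⊓ c) ⊔ (b ⊓ c)) ⊔ ((a^c ⊓ c^c) ⊔ (b^c ⊓ c^c)))); [lat|].
    eapply le_trans; [apply L4le; norm; lat|]. lat. }
  assert (R1 : le (biimp a b ⊓ biimp b c ⊓ biimp c d)
     ((a ⊓ b ⊓ (b ⊓ c)) ⊓ (c ⊓ d) ⊔ (a^c ⊓ b^c ⊓ (b^c ⊓ c^c)) ⊓ (c^c ⊓ d^c))).
  { unfold biimp.
    apply le_trans with (((a ⊓ b ⊓ (b ⊓ c)) ⊔ (a^c ⊓ b^c ⊓ (b^c ⊓ c^c))) ⊓ ((c ⊓ d) ⊔ (c^c ⊓ d^c))).
    - apply meet_glb; [|lat]. apply le_ml. apply L4le; norm; lat.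
    - apply L4le; norm; lat. }
  assert (L1 : le (imp1 a b ⊓ imp2 b c ⊓ imp1 c d ⊓ imp2 d a)
     ((a ⊓ b) ⊓ (c ⊓ d) ⊔ (d^c ⊓ a^c) ⊓ (b^c ⊓ c^c))).
  { unfold imp1, imp2.
    apply le_trans with (((a ⊓ b) ⊔ (d^c ⊓ a^c)) ⊓ ((c ⊓ d) ⊔ (b^c ⊓ c^c))).
    - apply meet_glb.
      + apply le_trans with ((a ⊔ (d^c ⊓ a^c)) ⊓ (a^c ⊔ (a ⊓ b))); [lat|].
        apply sas2; lat.
      + apply le_trans with ((c ⊔ (b^c ⊓ c^c)) ⊓ (c^c ⊔ (c ⊓ d))); [lat|].
        apply sas2; lat.
    - apply L4le; norm; lat. }
  assert (P1 : imp1 a b ⊓ imp2 b c ⊓ imp1 c d ⊓ imp2 d a = biimp a b ⊓ biimp b c ⊓ biimp c d).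
  { apply le_antisym.
    - eapply le_trans; [exact L1|]. unfold biimp. lat.
    - eapply le_trans; [exact R1|]. unfold imp1, imp2. lat. }
  split; [exact P1|].
  split.
  { apply le_antisym.
    - rewrite <- P1. unfold imp5, imp1, imp2. lat.
    - eapply le_trans; [exact R1|]. unfold imp5. lat. }
  split.
  { unfold imp1, imp2.
    apply le_trans with ((a^c ⊔ (a ⊓ b)) ⊓ ((c ⊔ (b^c ⊓ c^c)) ⊓ (c^c ⊔ (c ⊓ a)))); [lat|].
    apply le_trans with ((a^c ⊔ (a ⊓ b)) ⊓ ((b^c ⊓ c^c) ⊔ (c ⊓ a))).
    - apply meet_glb; [lat|]. apply le_mr.
      eapply le_trans; [apply sas2; lat|]. lat.
    - eapply le_trans; [apply L4le; norm; lat|]. unfold biimp. lat. }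
  pose proof (X5 a b c) as H5.
  split.
  { apply le_antisym; [|lat].
    apply le_trans with (biimp a b ⊓ biimp a c); [|lat].
    apply meet_glb; [lat|]. eapply le_trans; [exact H5|]. lat. }
  split.
  { eapply le_trans; [exact H5|]. lat. }
  unfold imp0.
  set (p := biimp a c) in *. set (q := biimp b c) in *. set (e := biimp a b) in *.
  clearbody p q e. unfold biimp.
  assert (Z : e ⊓ ((p ⊓ q) ⊔ (p^c ⊓ q^c))^c = zero L).
  { apply le_contra with (p ⊓ q).
    - eapply le_trans; [|exact H5]. norm. lat.
    - norm. lat. }
  rewrite <- (oc_invol L (e ^c ⊔ _)), deM_join, oc_invol, Z.
  rewrite <- (join_zero_l ((zero L)^c)). apply oc_join.
Qed.

End OMLTheory.

Theorem theorem4 (L : OML) (a b c d : L) :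
  (* (1) *)
  meet L (meet L (meet L (imp1 a b) (imp2 b c)) (imp1 c d)) (imp2 d a)
    = meet L (meet L (biimp a b) (biimp b c)) (biimp c d) /\
  (* (2) *)
  meet L (meet L (meet L (imp5 a b) (imp5 b c)) (imp5 c d)) (imp5 d a)
    = meet L (meet L (biimp a b) (biimp b c)) (biimp c d) /\
  (* (3) *)
  le (meet L (meet L (imp1 a b) (imp2 b c)) (imp1 c a)) (biimp a c) /\
  (* (4) *)
  meet L (biimp a b) (join L (biimp b c) (biimp a c))
    = join L (meet L (biimp a b) (biimp b c)) (meet L (biimp a b) (biimp a c)) /\
  (* (5) *)
  le (meet L (biimp a b) (join L (biimp b c) (biimp a c))) (biimp a c) /\
  (* (6) *)
  imp0 (biimp a b) (biimp (biimp a c) (biimp b c)) = one L.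
Proof. exact (main L a b c d). Qed.
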